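(* For all integers $n\geq 0$, \[ \sum_{k=0}^{\lfloor (n+1)/2\rfloor}(-1)^k\frac{\binom{2(n-k)}{n-k}}{\binom nk}\frac{(n+1-2k)_{2k}}{(k!)^2}=2^n \] and \[ \sum_{k=0}^{\lfloor (n+1)/2\rfloor}(-1)^k\frac{\binom{2(n-k)}{n-k}}{\binom nk}\frac{(n+1-2k)_{2k}}{(k!)^2}O_{n-k}=2^nH_n. \]
   Context: $(\lambda)_m=\lambda(\lambda+1)\cdots(\lambda+m-1)$ with $(\lambda)_0=1$ is the Pochhammer symbol. $H_n=\sum_{j=1}^n\frac1j$ ($H_0=0$) and $O_n=\sum_{j=1}^n\frac1{2j-1}$ ($O_0=0$). Terms with $k>n$ vanish because of the factor $(n+1-2k)_{2k}=0$ (by convention such terms are $0$; this only occurs for $n=0$... not at all, since $\lfloor (n+1)/2\rfloor\le n$ for $n\ge1$ and the sum is the single term $k=0$ for $n=0$). *)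

(* Defs.v *)
From mathcomp Require Import all_boot all_order all_algebra.
Set Implicit Arguments. Unset Strict Implicit. Unset Printing Implicit Defensive.
Import Order.TTheory GRing.Theory Num.Theory.
Local Open Scope ring_scope.

Definition pochhammer (x : rat) (m : nat) : rat :=
  \prod_(i < m) (x + i%:R).

Definition harmonic (n : nat) : rat :=
  \sum_(1 <= j < n.+1) (j%:R)^-1.

Definition oddharmonic (n : nat) : rat :=
  \sum_(1 <= j < n.+1) (2 * j%:R - 1)^-1.

Definition thm11_term (n k : nat) : rat :=
  (-1) ^+ k * ('C(2 * (n - k), n - k)%:R / 'C(n, k)%:R)
  * (pochhammer (n%:R + 1 - (2 * k)%:R) (2 * k) / (k`!%:R) ^+ 2).

(* Main.v *)
Require Import Defs.
From mathcomp Require Import all_boot all_order all_algebra.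
From mathcomp Require Import ring zify.
Import Order.TTheory GRing.Theory Num.Theory.
Local Open Scope ring_scope.

Definition cc (n m : nat) : rat :=
  if (m <= n)%N then (-1) ^+ (n - m) * ('C(m, n - m))%:R else 0.

Definition TT (u : nat -> rat) (n : nat) : rat :=
  \sum_(0 <= m < n.+1) cc n m * u m.

Definition DD (u : nat -> rat) (m : nat) : rat :=
  (m.+1)%:R * u m.+1 - (4 * m)%:R * u m.

Lemma binid (m k : nat) : (0 < m)%N ->
  ((m + k).+1 * 'C(m, k.+1) + 2 * (m + k) * 'C(m, k) =
   m * 'C(m.-1, k.+1) + 4 * m * 'C(m, k))%N.
Proof.
move=> m0.
have h1 := mul_bin_left m k.
have h2 := mul_bin_down m k.+1.
rewrite h2.
case: (leqP k m) => km.
  nia.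
have -> : 'C(m, k) = 0%N by rewrite bin_small.
have -> : 'C(m, k.+1) = 0%N by rewrite bin_small // ltnW.
by rewrite !muln0.
Qed.

Lemma binid' (m k : nat) :
  ((m.+1 + k).+1 * 'C(m.+1, k.+1) + 2 * (m.+1 + k) * 'C(m.+1, k) =
   m.+1 * 'C(m, k.+1) + 4 * m.+1 * 'C(m.+1, k))%N.
Proof. have := @binid m.+1 k (ltn0Sn m). by []. Qed.

Lemma ccid (n m : nat) :
  (n.+1)%:R * cc n.+1 m - (2 * n)%:R * cc n m
  = m%:R * cc n m.-1 - (4 * m)%:R * cc n m.
Proof.
rewrite /cc.
case: m => [|m].
  rewrite !mul0r subr0 !subn0 /=.
  case: n => [|n]; first by rewrite !mulr0 !mul0r subrr.
  by rewrite !bin_small // !mulr0 subrr.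
rewrite /=.
case: (ltngtP m n) => hm; rewrite /=.
- rewrite ifT; last lia.
  have -> : (n.+1 - m.+1 = (n - m.+1).+1)%N by lia.
  have -> : (n - m = (n - m.+1).+1)%N by lia.
  set k := (n - m.+1)%N.
  have hn : n = (m.+1 + k)%N by rewrite /k; lia.
  clearbody k. subst n.
  move: (binid' m k).
  move: 'C(m.+1, k.+1) 'C(m.+1, k) 'C(m, k.+1) => X Y Z.
  move=> H.
  rewrite !exprS.
  move: ((-1) ^+ k) => s.
  transitivity (-s * ((m.+1 + k).+1 * X + 2 * (m.+1 + k) * Y)%:R); first ring.
  rewrite H. ring.
- have -> : (m < n.+1)%N = false by rewrite ltnS leqNgt hm.
  by rewrite !mulr0 subrr.
- subst m. by rewrite ltnSn !subnn !bin0 expr0 !mulr1 !mulr0.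
Qed.

Lemma cc0 n : cc n n.+1 = 0.
Proof. by rewrite /cc ltnn. Qed.

Lemma TTw u n : TT u n = \sum_(0 <= m < n.+2) cc n m * u m.
Proof. rewrite /TT [in RHS]big_nat_recr //= cc0 mul0r addr0 //. Qed.

Lemma keyT u n :
  (n.+1)%:R * TT u n.+1 - (2 * n)%:R * TT u n = TT (DD u) n.
Proof.
transitivity (\sum_(0 <= m < n.+2) ((m%:R * cc n m.-1 - (4 * m)%:R * cc n m) * u m)).
  rewrite {1}/TT TTw !mulr_sumr -sumrB; apply: eq_bigr => m _.
  rewrite -ccid; ring.
rewrite /TT /DD.
under eq_bigr do rewrite mulrBl.
under [RHS]eq_bigr do rewrite mulrBr.
rewrite !sumrB; congr (_ - _).
  rewrite big_nat_recl //= mul0r mul0r add0r.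
  by apply: eq_bigr => m _; ring.
rewrite big_nat_recr //= cc0 mulr0 mul0r addr0.
by apply: eq_bigr => m _; ring.
Qed.

Lemma TT_ext u v n : (forall m, u m = v m) -> TT u n = TT v n.
Proof. by move=> h; rewrite /TT; apply: eq_bigr => m _; rewrite h. Qed.

Lemma TT_lin a b f g n :
  TT (fun m => a * f m + b * g m) n = a * TT f n + b * TT g n.
Proof.
rewrite /TT !mulr_sumr -big_split /=; apply: eq_bigr => m _; ring.
Qed.

Lemma TT0 u : TT u 0 = u 0.
Proof. by rewrite /TT big_nat1 /cc /= mul1r. Qed.

Lemma centbin m : (m.+1 * 'C((m.+1).*2, m.+1) = 2 * (m.*2.+1) * 'C(m.*2, m))%N.
Proof.
have h1 := mul_bin_diag (m.*2.+2) m.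
have h2 := mul_bin_diag (m.*2.+1) m.
have h3 : 'C(m.*2.+1, m) = 'C(m.*2.+1, m.+1).
  rewrite -[in RHS]bin_sub; last lia.
  by congr binomial; lia.
rewrite doubleS -h1 /= h3.
rewrite /= in h2.
rewrite -mulnA h2; lia.
Qed.

Definition uu (m : nat) : rat := ('C(m.*2, m))%:R.
Definition vv (m : nat) : rat := uu m * oddharmonic m.

Lemma centbinR m : (m.+1)%:R * uu m.+1 = 2 * (m.*2.+1)%:R * uu m.
Proof. by rewrite /uu -!natrM centbin. Qed.

Lemma DDu m : DD uu m = 2 * uu m.
Proof.
rewrite /DD centbinR -muln2; ring.
Qed.

Lemma oddS m : oddharmonic m.+1 = oddharmonic m + ((m.*2.+1)%:R)^-1.
Proof.
rewrite /oddharmonic big_nat_recr //=; congr (_ + (_)^-1).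
rewrite -muln2; ring.
Qed.

Lemma DDv m : DD vv m = 2 * vv m + 2 * uu m.
Proof.
rewrite /DD /vv mulrA centbinR oddS.
have h : (1 + m%:R * 2 : rat) != 0 by rewrite -(natrM _ m 2) nat1r pnatr_eq0.
rewrite -muln2. field. exact h.
Qed.

Lemma TT_scale a f n : TT (fun m => a * f m) n = a * TT f n.
Proof. by rewrite /TT mulr_sumr; apply: eq_bigr => m _; ring. Qed.

Lemma TTu n : TT uu n = 2 ^+ n.
Proof.
elim: n => [|n IH]; first by rewrite TT0 /uu bin0.
have := keyT uu n.
rewrite (@TT_ext _ _ n DDu) TT_scale IH => /eqP; rewrite subr_eq => /eqP H.
have hn : (n.+1)%:R != 0 :> rat by rewrite pnatr_eq0.
apply: (mulfI hn); rewrite H exprS; ring.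
Qed.

Lemma harmS n : harmonic n.+1 = harmonic n + ((n.+1)%:R)^-1.
Proof. by rewrite /harmonic big_nat_recr. Qed.

Lemma TTv n : TT vv n = 2 ^+ n * harmonic n.
Proof.
elim: n => [|n IH].
  by rewrite TT0 /vv /oddharmonic /harmonic !big_geq // mulr0.
have := keyT vv n.
rewrite (@TT_ext _ _ n DDv) TT_lin IH TTu => /eqP; rewrite subr_eq => /eqP H.
have hn : (n.+1)%:R != 0 :> rat by rewrite pnatr_eq0.
apply: (mulfI hn); rewrite H exprS harmS.
field. by rewrite nat1r.
Qed.

Lemma pochS x j : pochhammer x j.+1 = pochhammer x j * (x + j%:R).
Proof. by rewrite /pochhammer big_ord_recr. Qed.

Lemma poch_fact a j : (a`!)%:R * pochhammer (a.+1)%:R j = ((a + j)`!)%:R.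
Proof.
elim: j => [|j IH]; first by rewrite /pochhammer big_ord0 mulr1 addn0.
rewrite pochS mulrA IH addnS factS natrM mulrC; congr (_ * _).
by rewrite -natrD addSn.
Qed.

Lemma factR_neq0 m : (m`!)%:R != 0 :> rat.
Proof. by rewrite pnatr_eq0 -lt0n fact_gt0. Qed.

Lemma term_eq n k : (k <= (n.+1)./2)%N ->
  thm11_term n k = (-1) ^+ k * ('C(n - k, k))%:R * uu (n - k).
Proof.
move=> hk.
rewrite /thm11_term /uu mul2n.
case: (leqP (2 * k) n) => h2.
  have hkn : (k <= n)%N by lia.
  have hkk : (k <= n - k)%N by lia.
  have eP : pochhammer (n%:R + 1 - (2 * k)%:R) (2 * k) = (n`!)%:R / ((n - 2 * k)`!)%:R.
    have -> : n%:R + 1 - (2 * k)%:R = (n - 2 * k).+1%:R :> rat.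
      by rewrite -natr1 natrB // addrAC.
    have := poch_fact (n - 2 * k) (2 * k).
    rewrite subnK // => <-.
    by rewrite [_ * pochhammer _ _]mulrC mulfK // factR_neq0.
  have eC : ('C(n, k))%:R = (n`!)%:R / ((k`!)%:R * ((n - k)`!)%:R) :> rat.
    by rewrite -(bin_fact hkn) !natrM mulfK // mulf_neq0 // factR_neq0.
  have eK : ('C(n - k, k))%:R = ((n - k)`!)%:R / ((k`!)%:R * ((n - 2 * k)`!)%:R) :> rat.
    have -> : (n - 2 * k = n - k - k)%N by lia.
    by rewrite -(bin_fact hkk) !natrM mulfK // mulf_neq0 // factR_neq0.
  rewrite eP eC eK.
  have := factR_neq0 n; have := factR_neq0 k; have := factR_neq0 (n - k);
  have := factR_neq0 (n - 2 * k).
  move: (n`!)%:R (k`!)%:R ((n-k)`!)%:R ((n - 2 * k)`!)%:R => N b c a ha hc hb hN.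
  field.
  by rewrite ha hc hb hN.
have e : (2 * k = n.+1)%N.
  move: hk; rewrite -divn2 => hk; lia.
have -> : pochhammer (n%:R + 1 - (2 * k)%:R) (2 * k) = 0.
  rewrite e /pochhammer big_ord_recl /= -natr1 subrr add0r mul0r //.
have -> : 'C(n - k, k) = 0%N by rewrite bin_small //; lia.
by rewrite !mul0r !mulr0 mul0r.
Qed.

Lemma sum_eq (w : nat -> rat) n :
  \sum_(0 <= k < (n.+1)./2.+1) thm11_term n k * w (n - k)%N
  = TT (fun m => uu m * w m) n.
Proof.
have hh : ((n.+1)./2.+1 <= n.+1)%N by rewrite -divn2; lia.
rewrite /TT [RHS]big_nat_rev [RHS](big_cat_nat (leq0n _) hh).
rewrite [X in _ = _ + X](_ : _ = 0) ?addr0; last first.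
  rewrite big_nat_cond; apply: big1 => k /andP [/andP [h1 h2] _].
  rewrite add0n subSS /cc.
  have -> : (n - k <= n)%N = true by lia.
  have -> : 'C(n - k, n - (n - k)) = 0%N by rewrite bin_small //; move: h1; rewrite -divn2; lia.
  by rewrite mulr0 mul0r.
apply: eq_big_nat => k /andP [_ h2].
rewrite term_eq; last by rewrite -ltnS.
rewrite add0n subSS /cc.
have -> : (n - k <= n)%N = true by lia.
have -> : (n - (n - k) = k)%N by move: h2; rewrite -divn2; lia.
by rewrite mulrA.
Qed.

Theorem theorem11 (n : nat) :
  \sum_(0 <= k < (n.+1)./2.+1) thm11_term n k = 2 ^+ n
  /\
  \sum_(0 <= k < (n.+1)./2.+1) thm11_term n k * oddharmonic (n - k)
    = 2 ^+ n * harmonic n.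
Proof.
split.
  have := sum_eq (fun _ => 1) n.
  under eq_bigr do rewrite mulr1.
  move=> ->; rewrite -TTu; apply: TT_ext => m; by rewrite mulr1.
by rewrite sum_eq -TTv.
Qed.
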